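(* Let $\sigma\subset N_{\mathbb{Q}}$ be a strongly convex polyhedral cone, $n=\dim N_{\mathbb{Q}}$, and $P\in\operatorname{Pol}_{\sigma^\vee}(M)$. Then for every positive integer $e\ge n-1$ the polyhedron $eP$ is normal. In particular, every $\mathbb{T}$-stable integrally closed ideal of an affine toric surface $\operatorname{Spec}\mathbf{k}[\sigma^\vee\cap M]$ is normal.
   Context: $\mathbf{k}$ is algebraically closed of characteristic $0$; $M,N$ dual lattices. $\operatorname{Pol}_{\sigma^\vee}(M)$ is the set of polyhedra $P=Q+\sigma^\vee\subset M_{\mathbb{Q}}$ with $Q$ a polytope whose vertices lie in $M$. For $e\ge1$, $eP$ is the image of $P$ under the homothety of ratio $e$. $P$ is normal if for every integer $e\ge1$, $(eP)\cap M=\{m_1+\dots+m_e: m_1,\dots,m_e\in P\cap M\}$. An ideal $I$ of a domain is normal if $I^i$ is integrally closed for all $i\ge1$. *)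

(* Defs.v *)
(* M = Z^n (row vectors over int), M_Q = N_Q = Q^n (row vectors
   over rat), with the standard pairing <m,v> = sum_i m_i v_i. *)
From HB Require Import structures.
From mathcomp Require Import all_boot all_order all_algebra.
Set Implicit Arguments. Unset Strict Implicit. Unset Printing Implicit Defensive.
Import Order.TTheory GRing.Theory Num.Theory.
Local Open Scope ring_scope.

Definition lat n (m : 'rV[int]_n) : 'rV[rat]_n := map_mx (fun z : int => z%:~R) m.

Definition pair n (m v : 'rV[rat]_n) : rat := \sum_(i < n) m 0 i * v 0 i.

Definition in_cone n (gens : seq 'rV[rat]_n) (v : 'rV[rat]_n) : Prop :=
  exists a : 'I_(size gens) -> rat,
    (forall i, 0 <= a i) /\ v = \sum_(i < size gens) a i *: nth 0 gens i.

Definition strongly_convex n (gens : seq 'rV[rat]_n) : Prop :=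
  forall v, in_cone gens v -> in_cone gens (- v) -> v = 0.

Definition in_dual n (gens : seq 'rV[rat]_n) (m : 'rV[rat]_n) : Prop :=
  forall v, in_cone gens v -> 0 <= pair m v.

Definition in_conv n (vs : seq 'rV[int]_n) (x : 'rV[rat]_n) : Prop :=
  exists l : 'I_(size vs) -> rat,
    [/\ forall i, 0 <= l i, \sum_(i < size vs) l i = 1 &
        x = \sum_(i < size vs) l i *: lat (nth 0 vs i)].

Definition polyh n (vs : seq 'rV[int]_n) (gens : seq 'rV[rat]_n)
  (x : 'rV[rat]_n) : Prop :=
  exists q c, in_conv vs q /\ in_dual gens c /\ x = q + c.

Definition homot n (e : nat) (P : 'rV[rat]_n -> Prop) (x : 'rV[rat]_n) : Prop :=
  exists y, P y /\ x = e%:R *: y.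

Definition normal_polyh n (P : 'rV[rat]_n -> Prop) : Prop :=
  forall e : nat, (0 < e)%N -> forall m : 'rV[int]_n,
    homot e P (lat m) <->
    exists ms : 'I_e -> 'rV[int]_n,
      (forall j, P (lat (ms j))) /\ m = \sum_(j < e) ms j.

(* Main.v *)
Require Import Defs.
From HB Require Import structures.
From mathcomp Require Import all_boot all_order all_algebra.
From mathcomp Require Import ring lra zify.
From Stdlib Require Import Classical.
Import Order.TTheory GRing.Theory Num.Theory.
Local Open Scope ring_scope.
Set Implicit Arguments. Unset Strict Implicit.

Lemma pairD n (a b v : 'rV[rat]_n) : pair (a + b) v = pair a v + pair b v.
Proof. by rewrite /pair -big_split; apply: eq_bigr => i _; rewrite mxE mulrDl. Qed.
Lemma pairZ n c (a v : 'rV[rat]_n) : pair (c *: a) v = c * pair a v.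
Proof. by rewrite /pair mulr_sumr; apply: eq_bigr => i _; rewrite mxE mulrA. Qed.
Lemma pair0 n (v : 'rV[rat]_n) : pair 0 v = 0.
Proof. by rewrite /pair big1 // => i _; rewrite mxE mul0r. Qed.

Lemma dual0 n (gens : seq 'rV[rat]_n) : in_dual gens 0.
Proof. by move=> v _; rewrite pair0. Qed.
Lemma dualD n (gens : seq 'rV[rat]_n) a b : in_dual gens a -> in_dual gens b -> in_dual gens (a + b).
Proof. by move=> Ha Hb v Hv; rewrite pairD addr_ge0 ?Ha ?Hb. Qed.
Lemma dualZ n (gens : seq 'rV[rat]_n) c a : 0 <= c -> in_dual gens a -> in_dual gens (c *: a).
Proof. by move=> Hc Ha v Hv; rewrite pairZ mulr_ge0 ?Ha. Qed.
Lemma dual_sum n (gens : seq 'rV[rat]_n) (I : finType) (mu : I -> rat) c :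
  (forall i, 0 <= mu i) -> (forall i, in_dual gens (c i)) -> in_dual gens (\sum_i mu i *: c i).
Proof.
move=> Hm Hc; apply: (big_ind (in_dual gens)); [exact: dual0|exact: dualD|].
by move=> i _; apply: dualZ.
Qed.

Lemma latD n (a b : 'rV[int]_n) : lat (a + b) = lat a + lat b.
Proof. by apply/rowP => i; rewrite !mxE rmorphD. Qed.
Lemma latN n (a : 'rV[int]_n) : lat (- a) = - lat a.
Proof. by apply/rowP => i; rewrite !mxE rmorphN. Qed.
Lemma latB n (a b : 'rV[int]_n) : lat (a - b) = lat a - lat b.
Proof. by rewrite latD latN. Qed.
Lemma lat0 n : lat (0 : 'rV[int]_n) = 0.
Proof. by apply/rowP => i; rewrite !mxE. Qed.
Lemma latMn n (a : 'rV[int]_n) k : lat (a *+ k) = k%:R *: lat a.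
Proof. elim: k => [|k IH]; first by rewrite mulr0n lat0 scale0r. by rewrite mulrS latD IH mulrS scalerDl scale1r. Qed.
Lemma lat_sum n (I : finType) (F : I -> 'rV[int]_n) : lat (\sum_i F i) = \sum_i lat (F i).
Proof. by apply: (big_morph _ (@latD n) (lat0 n)). Qed.
Lemma lat_inj n : injective (@lat n).
Proof. move=> a b H; apply/rowP => i; have := congr1 (fun M : 'rV[rat]_n => M 0 i) H; rewrite !mxE; exact: intr_inj. Qed.


Lemma polyh_vs n (vs : seq 'rV[int]_n) gens (l : 'I_(size vs)) :
  polyh vs gens (lat (nth 0 vs l)).
Proof.
exists (lat (nth 0 vs l)), 0; split; last by split; [exact: dual0| rewrite addr0].
exists (fun i => (i == l)%:R); split.
- by move=> i; rewrite ler0n.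
- by rewrite (bigD1 l) //= eqxx big1 ?addr0 // => i /negbTE ->.
- by rewrite (bigD1 l) //= eqxx scale1r big1 ?addr0 // => i /negbTE ->; rewrite scale0r.
Qed.

Lemma polyhD n (vs : seq 'rV[int]_n) gens x c :
  polyh vs gens x -> in_dual gens c -> polyh vs gens (x + c).
Proof.
move=> [q [c' [Hq [Hc ->]]]] Hc2; exists q, (c' + c); split => //; split.
  exact: dualD. by rewrite addrA.
Qed.

Lemma wsum n (vs : seq 'rV[int]_n) gens (I : finType) (p : I -> 'rV[rat]_n)
  (mu : I -> rat) C T :
  (0 < T)%N -> (forall i, polyh vs gens (p i)) -> (forall i, 0 <= mu i) ->
  \sum_i mu i = T%:R -> in_dual gens C ->
  homot T (polyh vs gens) (\sum_i mu i *: p i + C).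
Proof.
move=> T0 Hp Hmu Hsum HC.
have [qc Hqc] := fin_all_exists (fun i => Hp i).
have [cc Hcc] := fin_all_exists (fun i => Hqc i).
have [lam Hlam] := fin_all_exists (fun i => (proj1 (Hcc i))).
have HT : (T%:R : rat) != 0 by rewrite pnatr_eq0 -lt0n.
pose L l := T%:R^-1 * \sum_i mu i * lam i l.
exists (\sum_l L l *: lat (nth 0 vs l) + T%:R^-1 *: (\sum_i mu i *: cc i + C)).
split.
  exists (\sum_l L l *: lat (nth 0 vs l)), (T%:R^-1 *: (\sum_i mu i *: cc i + C)).
  split; last split => //.
  - exists L; split.
    + move=> l; rewrite /L mulr_ge0 ?invr_ge0 ?ler0n // sumr_ge0 // => i _.
      by case: (Hlam i) => H _ _; rewrite mulr_ge0.
    + rewrite /L -mulr_sumr exchange_big /=.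
      rewrite (eq_bigr (fun i => mu i)) ?Hsum ?mulVf //.
      by move=> i _; rewrite -mulr_sumr; case: (Hlam i) => _ -> _; rewrite mulr1.
    + by [].
  - apply: dualZ; first by rewrite invr_ge0 ler0n.
    apply: dualD => //; apply: dual_sum => // i; by case: (Hcc i) => _ [].
rewrite scalerDr scalerA mulfV // scale1r scaler_sumr.
rewrite addrA; congr (_ + _).
rewrite (eq_bigr (fun i => mu i *: (\sum_l lam i l *: lat (nth 0 vs l)) + mu i *: cc i)); last first.
  move=> i _; case: (Hcc i) => _ [_ ->]; case: (Hlam i) => _ _ ->.
  by rewrite scalerDr.
rewrite big_split /=; congr (_ + _).
rewrite (eq_bigr (fun i => \sum_l (mu i * lam i l) *: lat (nth 0 vs l))); last first.
  by move=> i _; rewrite scaler_sumr; apply: eq_bigr => l _; rewrite scalerA.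
rewrite exchange_big /=; apply: eq_bigr => l _.
by rewrite scalerA /L mulrA mulfV // mul1r scaler_suml.
Qed.


Lemma choose_r (I : finType) (a : I -> nat) T :
  (T <= \sum_i a i)%N -> exists r : I -> nat, (forall i, r i <= a i)%N /\ (\sum_i r i)%N = T.
Proof.
elim: T => [_|T IH HT]; first by exists (fun _ => 0%N); split => // ; rewrite big1.
have [r [Hr Hs]] := IH (ltnW HT).
have [i Hi] : exists i, (r i < a i)%N.
  case: (pickP (fun i => (r i < a i)%N)) => [i Hi|H]; first by exists i.
  have : (\sum_i a i <= \sum_i r i)%N by apply: leq_sum => i _; rewrite leqNgt H.
  by rewrite Hs leqNgt HT.
exists (fun j => if j == i then (r j).+1 else r j); split.
  by move=> j; case: eqP => [->|]; [|rewrite Hr].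
rewrite (bigD1 i) //= eqxx (eq_bigr r); last by move=> j /negbTE ->.
by rewrite -Hs [in RHS](bigD1 i) //= addSn.
Qed.

Lemma good n (vs : seq 'rV[int]_n) gens (I : finType) (w : I -> 'rV[int]_n)
  (Lam : I -> rat) C x E k :
  (0 < E)%N -> (0 < k)%N -> (forall i, polyh vs gens (lat (w i))) ->
  (forall i, 0 <= Lam i) -> \sum_i Lam i = (k.+1 * E)%:R -> in_dual gens C ->
  lat x = \sum_i Lam i *: lat (w i) + C ->
  \sum_i (Lam i - (Num.truncn (Lam i))%:R) <= E%:R ->
  exists m, homot E (polyh vs gens) (lat m) /\ homot (k * E) (polyh vs gens) (lat (x - m)).
Proof.
move=> E0 k0 Hw HL HS HC Hx Hs.
pose a i := Num.truncn (Lam i).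
have Ha i : (a i)%:R <= Lam i by rewrite /a truncn_le.
have HA : (k * E <= \sum_i a i)%N.
  rewrite -(ler_nat rat) natr_sum.
  move: Hs; rewrite sumrB HS mulSn natrD; lra.
have [r [Hr Hrs]] := choose_r HA.
exists (x - \sum_i w i *+ r i); split; last first.
  rewrite opprB addrC subrK lat_sum.
  rewrite -[X in homot _ _ X]addr0.
  rewrite (eq_bigr (fun i => (r i)%:R *: lat (w i))); last by move=> i _; rewrite latMn.
  apply: wsum => //; first by rewrite muln_gt0 k0.
  - by rewrite -natr_sum Hrs.
  - exact: dual0.
rewrite latB Hx lat_sum addrAC.
have -> : \sum_i lat (w i *+ r i) = \sum_i (r i)%:R *: lat (w i) by apply: eq_bigr => i _; exact: latMn.
rewrite -sumrB.
rewrite (eq_bigr (fun i => (Lam i - (r i)%:R) *: lat (w i))); last by move=> i _; rewrite scalerBl.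
apply: wsum => //.
- by move=> i; rewrite subr_ge0 (le_trans _ (Ha i)) // ler_nat Hr.
- by rewrite sumrB HS -natr_sum Hrs mulSn natrD addrK.
Qed.


Lemma ker_vec q p (A : 'M[rat]_(q, p)) :
  ~~ row_free A -> exists v : 'rV_q, v != 0 /\ v *m A = 0.
Proof.
move=> Hf.
have Hr : (\rank A < q)%N by rewrite ltn_neqAle Hf rank_leq_row.
have HK : kermx A != 0.
  apply/eqP => HK; move: (mxrank_ker A); rewrite HK mxrank0 => /esym/eqP.
  by rewrite subn_eq0 leqNgt Hr.
have [i Hi] : exists i, row i (kermx A) != 0.
  case: (pickP (fun i => row i (kermx A) != 0)) => [i Hi|H]; first by exists i.
  exfalso; move/eqP: HK; apply; apply/row_matrixP => i; rewrite row0; apply/eqP.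
  by apply: negbFE; exact: H.
exists (row i (kermx A)); split => //.
by rewrite -row_mul mulmx_ker row0.
Qed.

Definition indep (I : finType) p (g : I -> 'rV[rat]_p) (mu : I -> rat) :=
  forall nu : I -> rat, (forall i, mu i = 0 -> nu i = 0) ->
    \sum_i nu i *: g i = 0 -> forall i, nu i = 0.

Lemma carath (I : finType) p (g : I -> 'rV[rat]_p) (mu : I -> rat) :
  (forall i, 0 <= mu i) ->
  exists mu', [/\ forall i, 0 <= mu' i,
    \sum_i mu' i *: g i = \sum_i mu i *: g i & indep g mu'].
Proof.
move=> Hmu.
suff : forall (c : nat) (mu : I -> rat), (forall i, 0 <= mu i) -> (#|[set i | mu i != 0%R]| <= c)%N ->
  exists mu', [/\ forall i, 0 <= mu' i,
    \sum_i mu' i *: g i = \sum_i mu i *: g i & indep g mu'].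
  by move/(_ #|I| mu Hmu (max_card _)).
clear Hmu; elim=> [|c IH] {}mu Hmu Hc.
  exists mu; split => // nu Hnu _ i; apply: Hnu; apply/eqP.
  move: Hc; rewrite leqn0 cards_eq0 => /eqP/setP/(_ i).
  by rewrite inE in_set0 => /negbFE.
case: (classic (indep g mu)) => [Hi|Hni]; first by exists mu; split.
have [nu [Hsupp [Hsum [i0 Hi0]]]] : exists nu : I -> rat, (forall i, mu i = 0 -> nu i = 0) /\
   \sum_i nu i *: g i = 0 /\ exists i, nu i != 0.
  apply: NNPP => H; apply: Hni => nu Hs Hz i; apply: NNPP => Hn; apply: H.
  by exists nu; split => //; split => //; exists i; apply/eqP.
have [nu' [Hsupp' [Hsum' [i1 Hi1]]]] : exists nu : I -> rat, (forall i, mu i = 0 -> nu i = 0) /\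
   \sum_i nu i *: g i = 0 /\ exists i, 0 < nu i.
  case: (ltrgtP (nu i0) 0) => Hs; last by rewrite Hs eqxx in Hi0.
    exists (fun i => - nu i); split; first by move=> i /Hsupp ->; rewrite oppr0.
    split; last by exists i0; rewrite oppr_gt0.
    by rewrite (eq_bigr (fun i => - (nu i *: g i))) ?sumrN ?Hsum ?oppr0 // => i _; rewrite scaleNr.
  by exists nu; split => //; split => //; exists i0.
case: (@arg_minP _ _ _ i1 (fun i => 0 < nu' i) (fun i => mu i / nu' i) Hi1) => j Hj Hmin.
pose t := mu j / nu' j.
have Ht : 0 <= t by rewrite divr_ge0 ?Hmu ?ltW.
pose mu2 i := mu i - t * nu' i.
have [||mu3 [H1 H2 H3]] := IH mu2.
- move=> i; rewrite /mu2 subr_ge0; case: (ltrP 0 (nu' i)) => Hi.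
    by have := Hmin i Hi; rewrite -/t ler_pdivlMr // mulrC.
  by apply: (le_trans _ (Hmu i)); rewrite mulr_ge0_le0.
- rewrite -ltnS; apply: leq_trans Hc; apply: proper_card; apply/properP; split.
    apply/subsetP => i; rewrite !inE; apply: contra => /eqP H.
    by rewrite /mu2 H (Hsupp' i H) mulr0 subr0.
  exists j; rewrite !inE.
    by apply/eqP => H; move: Hj; rewrite (Hsupp' j H) ltxx.
  by rewrite /mu2 /t divfK ?subrr // gt_eqF.
- exists mu3; split => //; rewrite H2.
  rewrite (eq_bigr (fun i => mu i *: g i - t *: (nu' i *: g i))); last first.
    by move=> i _; rewrite scalerBl scalerA.
  by rewrite sumrB -scaler_sumr Hsum' scaler0 subr0.
Qed.


Lemma indep_inj (I : finType) p q (g : I -> 'rV[rat]_p) mu (h : 'I_q -> I) :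
  indep g mu -> injective h -> (forall k, mu (h k) != 0) ->
  row_free (\matrix_(k < q) g (h k)).
Proof.
move=> Hind Hinj Hmu; apply/negPn/negP => Hnf.
have [v [Hv0 Hv]] := ker_vec Hnf.
pose nu i := if [pick k | h k == i] is Some k then v 0 k else 0.
have Hnuh k : nu (h k) = v 0 k.
  rewrite /nu; case: pickP => [k' /eqP /Hinj -> //|/(_ k)]; by rewrite eqxx.
have Hnu0 i : i \notin [set h k | k in predT] -> nu i = 0.
  move=> Hi; rewrite /nu; case: pickP => [k /eqP Hk|//].
  by move: Hi; rewrite -Hk imset_f.
have Hz := Hind nu.
suff Hall : forall k, v 0 k = 0.
  by move/eqP: Hv0; apply; apply/rowP => k; rewrite Hall mxE.
move=> k; rewrite -Hnuh; apply: Hz.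
- move=> i Hi; case: (boolP (i \in [set h k | k in predT])) => [/imsetP [k' _ Hik]|/Hnu0 //].
  by move: (Hmu k'); rewrite -Hik Hi eqxx.
- rewrite (bigID (mem [set h k | k in predT])) /= [X in _ + X]big1 ?addr0; last first.
    by move=> i /Hnu0 ->; rewrite scale0r.
  rewrite big_imset /=; last by move=> a b _ _; apply: Hinj.
  rewrite -[RHS]Hv mulmx_sum_row; apply: eq_bigr => k' _.
  by rewrite Hnuh rowK.
Qed.


Definition repl p (B : 'M[rat]_p) j (c : 'rV[rat]_p) : 'M[rat]_p :=
  \matrix_(i, k) (if i == j then (c *m B) 0 k else B i k).

Lemma det_repl p (B : 'M[rat]_p) j (c : 'rV[rat]_p) :
  \det (repl B j c) = c 0 j * \det B.
Proof.
pose u := c - c 0 j *: delta_mx 0 j.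
have uj : u 0 j = 0 by rewrite !mxE !eqxx /= mulr1 subrr.
pose D := repl B j u.
have HD : \det D = 0.
  apply/eqP; apply: contraT => HD.
  have Hu : D \in unitmx by rewrite unitmxE unitfE.
  pose vv := u - delta_mx 0 j.
  have Hvv : vv *m D = 0.
    apply/rowP => k; rewrite !mxE.
    rewrite (eq_bigr (fun i => u 0 i * B i k - (delta_mx 0 j : 'rV[rat]_p) 0 i * D i k)); last first.
      move=> i _; rewrite !mxE mulrBl; case: (eqVneq i j) => [->|Hij]; first by rewrite !eqxx /= mulr1 subrr !mul0r.
      by [].
    rewrite sumrB [X in _ - X](bigD1 j) //= [X in _ - (_ + X)]big1 ?addr0; last first.
      by move=> i /negbTE Hi; rewrite !mxE Hi andbF mul0r.
    by rewrite !mxE !eqxx /= mul1r subrr.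
  have : vv = 0 by rewrite -(mulmxK Hu vv) Hvv mul0mx.
  by move/rowP/(_ j); rewrite !mxE !eqxx /= mulr1 subrr sub0r => /eqP; rewrite oppr_eq0 oner_eq0.
rewrite (@determinant_multilinear _ _ _ B D j (c 0 j) 1).
- by rewrite HD mulr0 addr0.
- apply/rowP => k; rewrite !mxE eqxx mul1r.
  rewrite (eq_bigr (fun i => c 0 j * ((delta_mx 0 j : 'rV[rat]_p) 0 i * B i k) + u 0 i * B i k)).
    rewrite big_split /= -mulr_sumr (bigD1 j) //= big1 ?addr0; last first.
      by move=> i /negbTE Hi; rewrite !mxE Hi mul0r.
    by rewrite !mxE !eqxx mul1r.
  move=> i _; rewrite !mxE; case: (eqVneq i j) => [->|Hij]; rewrite ?eqxx ?(negbTE Hij) /=; ring.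
- by apply/matrixP => i k; rewrite !mxE eq_sym (negbTE (neq_lift j i)).
- by apply/matrixP => i k; rewrite !mxE eq_sym (negbTE (neq_lift j i)).
Qed.


Definition Wm n (W : 'I_n.+1 -> 'rV[int]_n) : 'M[int]_(n.+1) :=
  \matrix_(i, k) (if unlift ord0 k is Some k' then W i 0 k' else 1).

Lemma absz_lt (d d' : int) (c : rat) :
  d' %:~R = c * d%:~R -> d != 0 -> 0 < c < 1 -> d' != 0 /\ (absz d' < absz d)%N.
Proof.
move=> H d0 /andP [c0 c1].
have Hd : 0 < `|(d%:~R : rat)| by rewrite normr_gt0 intr_eq0.
split.
  by rewrite -(intr_eq0 rat) H mulf_eq0 negb_or (gt_eqF c0) intr_eq0.
rewrite -ltz_nat !abszE -(ltr_int rat) !intr_norm H normrM.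
rewrite gtr0_norm // -[X in _ < X]mul1r ltr_pM2r //.
Qed.

Lemma testn n (A K E : nat) : (n.-1 <= E)%N -> (A + E < K)%N -> (K < A + n.+1)%N -> K = (A + n)%N /\ (0 < n)%N.
Proof. lia. Qed.


Definition lift1 n (a : rat) (v : 'rV[rat]_n) : 'rV[rat]_n.+1 :=
  \row_kk (if unlift ord0 kk is Some k' then v 0 k' else a).

Lemma lift1_sum n (I : finType) (c a : I -> rat) (v : I -> 'rV[rat]_n) :
  \sum_i c i *: lift1 (a i) (v i) = lift1 (\sum_i c i * a i) (\sum_i c i *: v i).
Proof.
apply/rowP => kk; rewrite summxE mxE; case Ek: (unlift ord0 kk) => [k'|];
  rewrite ?summxE; apply: eq_bigr => i _; rewrite !mxE Ek //.
Qed.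

Lemma lift1_inj n a b (v w : 'rV[rat]_n) : lift1 a v = lift1 b w -> a = b /\ v = w.
Proof.
move=> H; split.
  by have := congr1 (fun M : 'rV[rat]_n.+1 => M 0 ord0) H; rewrite !mxE unlift_none.
apply/rowP => k; have := congr1 (fun M : 'rV[rat]_n.+1 => M 0 (lift ord0 k)) H.
by rewrite !mxE liftK.
Qed.

Lemma sum_S (V : nmodType) N (S : {set 'I_N}) m (HS : #|S| = m) (F : 'I_N -> V) :
  (forall l, l \notin S -> F l = 0) ->
  \sum_l F l = \sum_(k < m) F (enum_val (cast_ord (esym HS) k)).
Proof.
move=> H; subst m; rewrite (bigID (mem S)) /= [X in _ + X]big1 ?addr0; last first.
  by move=> l; apply: H.
rewrite (big_enum_val F); apply: eq_bigr => k _; by rewrite cast_ord_id.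
Qed.
Lemma simplex n (vs : seq 'rV[int]_n) gens E k :
  (0 < E)%N -> (n.-1 <= E)%N -> (0 < k)%N ->
  forall D (W : 'I_n.+1 -> 'rV[int]_n) (Lam : 'I_n.+1 -> rat) x,
  (absz (\det (Wm W)) <= D)%N -> \det (Wm W) != 0 ->
  (forall i, polyh vs gens (lat (W i))) -> (forall i, 0 <= Lam i) ->
  \sum_i Lam i = (k.+1 * E)%:R -> lat x = \sum_i Lam i *: lat (W i) ->
  exists m, homot E (polyh vs gens) (lat m) /\ homot (k * E) (polyh vs gens) (lat (x - m)).
Proof.
move=> E0 En k0; elim=> [|D IH] W Lam x HD Hd0 HW HL HS Hx.
  by move: HD; rewrite leqn0 absz_eq0 (negbTE Hd0).
pose a i := Num.truncn (Lam i).
pose f i := Lam i - (a i)%:R.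
have Hf0 i : 0 <= f i by rewrite subr_ge0 truncn_le.
have Hf1 i : f i < 1.
  by have /andP [_ H] := truncn_itv (HL i); rewrite /f ltrBlDr addrC natr1.
case: (lerP (\sum_i f i) E%:R) => Hs.
  have G := @good _ vs gens _ W Lam 0 x E k E0 k0 HW HL HS (@dual0 n gens).
  apply: G; first by rewrite addr0. exact: Hs.
pose A := (\sum_i a i)%N.
have HsA : \sum_i f i = (k.+1 * E)%:R - A%:R by rewrite sumrB HS natr_sum.
have Hsn : \sum_i f i < n.+1%:R.
  apply: (@lt_le_trans _ _ (\sum_(i < n.+1) (1 : rat))).
    by apply: ltr_sum => //; apply/hasP; exists ord0 => //; exact: mem_index_enum.
  by rewrite sumr_const card_ord.
have [HK n0] : (k.+1 * E)%N = (A + n)%N /\ (0 < n)%N.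
  have H1 : (A + E < k.+1 * E)%N by rewrite -(ltr_nat rat) natrD; move: Hs; rewrite HsA; lra.
  have H2 : (k.+1 * E < A + n.+1)%N by rewrite -(ltr_nat rat) natrD; move: Hsn; rewrite HsA -natr1; lra.
  lia.
have Hs_n : \sum_i f i = n%:R by rewrite HsA HK natrD; lra.
have Hfpos i : 0 < f i.
  have H1 : \sum_(l | l != i) (1 : rat) = n%:R.
    have := sumr_const [pred l : 'I_n.+1 | true] (1 : rat).
    rewrite (bigD1 i) //= card_ord => /eqP; rewrite -natr1 addrC; move/eqP/addIr => <-.
    by apply: eq_bigl => l.
  have H2 : \sum_(l | l != i) f l < \sum_(l | l != i) (1 : rat).
    apply: ltr_sum => //; apply/hasP.
    exists (if i == ord0 then ord_max else ord0); first exact: mem_index_enum.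
    case: (eqVneq i ord0) => [->|Hi]; last by rewrite eq_sym.
    by apply/eqP => /(congr1 val) /=; lia.
  by move: Hs_n; rewrite (bigD1 i) //= => Hsum; move: H2; rewrite H1; lra.
pose y := x - \sum_i W i *+ a i.
pose z := \sum_i W i - y.
have Hz : lat z = \sum_i (1 - f i) *: lat (W i).
  rewrite /z /y !latB !lat_sum Hx.
  have -> : \sum_i lat (W i *+ a i) = \sum_i (a i)%:R *: lat (W i).
    by apply: eq_bigr => i _; exact: latMn.
  rewrite opprB -sumrB -big_split /=; apply: eq_bigr => i _.
  by rewrite /f scalerBl scale1r scalerBl opprB.
have Hsum1 : \sum_i (1 - f i) = 1.
  by rewrite sumrB Hs_n sumr_const card_ord -natr1; lra.
have Pz : polyh vs gens (lat z).
  have := @wsum _ vs gens _ (fun i => lat (W i)) (fun i => 1 - f i) 0 1 (ltn0Sn 0) HW.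
  case => //.
  - by move=> i; rewrite subr_ge0 ltW.
  - exact: dual0.
  by move=> p [Pp]; rewrite addr0 -Hz scale1r => ->.
case: (@arg_minP _ _ _ ord0 predT (fun i => Lam i / (1 - f i)) erefl) => j _ Hmin.
have Hf1' i : 0 < 1 - f i by rewrite subr_gt0.
pose t := Lam j / (1 - f j).
have Ht0 : 0 <= t by rewrite divr_ge0 ?HL ?ltW.
have Htj : t * (1 - f j) = Lam j by rewrite /t divfK // gt_eqF.
pose W' i := if i == j then z else W i.
pose L2 i := if i == j then 0 else Lam i - t * (1 - f i).
have HL2 i : L2 i + t * (1 - f i) = Lam i.
  by rewrite /L2; case: eqP => [->|_]; [rewrite add0r|rewrite subrK].
pose Lam' i := if i == j then t else L2 i.
have HL' i : 0 <= Lam' i.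
  rewrite /Lam' /L2; case: eqP => // _; rewrite subr_ge0.
  by have := Hmin i erefl; rewrite -/t ler_pdivlMr.
have HS' : \sum_i Lam' i = (k.+1 * E)%:R.
  rewrite -HS -(eq_bigr _ (fun i _ => HL2 i)) big_split /= -mulr_sumr Hsum1 mulr1.
  rewrite (bigD1 j) //= [in RHS](bigD1 j) //= /Lam' /L2 !eqxx add0r addrC; congr (_ + _).
  by apply: eq_bigr => i /negbTE ->.
have Hx' : lat x = \sum_i Lam' i *: lat (W' i).
  rewrite Hx -(eq_bigr _ (fun i _ => congr1 (fun c => c *: lat (W i)) (HL2 i))).
  rewrite (eq_bigr (fun i => L2 i *: lat (W i) + t *: ((1 - f i) *: lat (W i)))); last first.
    by move=> i _; rewrite scalerA -scalerDl.
  rewrite big_split /= -scaler_sumr -Hz.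
  rewrite (bigD1 j) //= [in RHS](bigD1 j) //= /Lam' /W' /L2 !eqxx scale0r add0r addrC.
  by congr (_ + _); apply: eq_bigr => i /negbTE ->.
have HW' i : polyh vs gens (lat (W' i)) by rewrite /W'; case: eqP.
have Hmap : map_mx (fun z : int => z%:~R) (Wm W') =
            repl (map_mx (fun z : int => z%:~R) (Wm W)) j (\row_l (1 - f l)).
  apply/matrixP => i kk; rewrite !mxE.
  case: (eqVneq i j) => [->|Hij]; last by rewrite /W' (negbTE Hij).
  rewrite /W' eqxx.
  have Hzk kk' : (z 0 kk')%:~R = \sum_l (1 - f l) * (W l 0 kk')%:~R :> rat.
    have := congr1 (fun M : 'rV[rat]_n => M 0 kk') Hz; rewrite /= mxE summxE => ->.
    by apply: eq_bigr => l _; rewrite !mxE.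
  rewrite (eq_bigr (fun l => (1 - f l) * (if unlift ord0 kk is Some k' then W l 0 k' else 1)%:~R)); last first.
    by move=> l _; rewrite !mxE.
  case: (unlift ord0 kk) => [k'|] /=; first by rewrite Hzk.
  by rewrite (eq_bigr (fun l => 1 - f l)) ?Hsum1 // => l _; rewrite mulr1.
have Hdet : (\det (Wm W'))%:~R = (1 - f j) * (\det (Wm W))%:~R :> rat.
  by rewrite -!det_map_mx Hmap det_repl mxE.
have Hc : 0 < 1 - f j < 1 by rewrite Hf1' /=; have := Hfpos j; lra.
have [Hd0' Hlt] := absz_lt Hdet Hd0 Hc.
apply: (IH W' Lam' x) => //.
by rewrite -ltnS (leq_trans Hlt HD).
Qed.

Lemma peel n (vs : seq 'rV[int]_n) gens E k x :
  (0 < E)%N -> (n.-1 <= E)%N -> (0 < k)%N ->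
  homot (k.+1 * E) (polyh vs gens) (lat x) ->
  exists m, homot E (polyh vs gens) (lat m) /\ homot (k * E) (polyh vs gens) (lat (x - m)).
Proof.
move=> E0 En k0 [p [[q [c [[lam [Hl0 Hl1 Hq]] [Hc Hpq]]]] Hx]].
set N := size vs.
set K : rat := (k.+1 * E)%:R.
pose ga (i : 'I_N.+1) : rat := if unlift ord0 i is Some _ then 1 else 0.
pose gv (i : 'I_N.+1) : 'rV[rat]_n :=
  if unlift ord0 i is Some l then lat (nth 0 vs l) else K *: c.
pose g i := lift1 (ga i) (gv i).
pose mu (i : 'I_N.+1) := if unlift ord0 i is Some l then K * lam l else 1.
have Hmu i : 0 <= mu i by rewrite /mu; case: unlift => [l|] //; rewrite mulr_ge0 ?ler0n.
have [mu' [Hmu' Hsum Hind]] := carath g Hmu.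
move: Hsum; rewrite /g !lift1_sum => /lift1_inj [Ha Hv].
pose Lam l := mu' (lift ord0 l).
pose C := mu' ord0 *: (K *: c).
have HLam : \sum_l Lam l = K.
  move: Ha; rewrite !big_ord_recl /ga unlift_none !mulr0 !add0r.
  have -> : \sum_(i < N) mu' (lift ord0 i) * (if unlift ord0 (lift ord0 i) is Some _ then 1 else 0) = \sum_l Lam l.
    by apply: eq_bigr => l _; rewrite liftK mulr1.
  move=> ->; rewrite (eq_bigr (fun l => K * lam l)); last by move=> l _; rewrite /mu liftK mulr1.
  by rewrite -mulr_sumr Hl1 mulr1.
have HC : in_dual gens C by apply: dualZ => //; apply: dualZ => //; rewrite ler0n.
have E1 : \sum_i mu' i *: gv i = C + \sum_l Lam l *: lat (nth 0 vs l).
  by rewrite big_ord_recl /gv unlift_none; congr (_ + _); apply: eq_bigr => l _; rewrite liftK.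
have E2 : \sum_i mu i *: gv i = lat x.
  rewrite big_ord_recl /gv /mu unlift_none scale1r.
  rewrite (eq_bigr (fun l => K *: (lam l *: lat (nth 0 vs l)))); last first.
    by move=> l _; rewrite liftK scalerA.
  by rewrite -scaler_sumr -Hq -scalerDr addrC -Hpq -Hx.
have HxL : lat x = \sum_l Lam l *: lat (nth 0 vs l) + C.
  by rewrite -E2 -Hv E1 addrC.
pose S := [set l : 'I_N | Lam l != 0].
have HLS l : l \notin S -> Lam l = 0 by rewrite inE negbK => /eqP.
pose T := [set i : 'I_N.+1 | mu' i != 0].
have HT : (#|T| <= n.+1)%N.
  have := @indep_inj _ _ _ g mu' (@enum_val _ (mem T)) Hind (@enum_val_inj _ _).
  move=> /(_ _) H; have {H} : row_free (\matrix_(kk < #|T|) g (enum_val kk)).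
    by apply: H => kk; have := enum_valP kk; rewrite inE.
  by rewrite /row_free => /eqP <-; apply: rank_leq_col.
have HTS : #|T| = (#|S| + (mu' ord0 != 0%R))%N.
  rewrite -!sum1_card !big_mkcond /= big_ord_recl !inE addnC; congr (_ + _)%N.
  rewrite [RHS]big_mkcond; apply: eq_bigr => l _; by rewrite !inE.
have HLam0 l : 0 <= Lam l by apply: Hmu'.
case: (eqVneq #|S| n.+1) => HS.
  have Hm0 : mu' ord0 = 0.
    by move: HT; rewrite HTS HS; case: eqP => // _ /=; lia.
  have HC0 : C = 0 by rewrite /C Hm0 scale0r.
  pose h (kk : 'I_n.+1) := enum_val (cast_ord (esym HS) kk).
  pose W kk := nth 0 vs (h kk).
  pose LamW kk := Lam (h kk).
  have HSW : \sum_kk LamW kk = K by rewrite -HLam (sum_S HS).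
  have HxW : lat x = \sum_kk LamW kk *: lat (W kk).
    rewrite HxL HC0 addr0 (sum_S HS) //.
    by move=> l /HLS ->; rewrite scale0r.
  have Hinj : injective (fun kk => lift ord0 (h kk)).
    by move=> a b /lift_inj /enum_val_inj /cast_ord_inj.
  have Hrf := @indep_inj _ _ _ g mu' _ Hind Hinj.
  have {Hrf} Hrf : row_free (\matrix_(kk < n.+1) g (lift ord0 (h kk))).
    apply: Hrf => kk; have := enum_valP (cast_ord (esym HS) kk); by rewrite inE.
  have Hmat : \matrix_(kk < n.+1) g (lift ord0 (h kk)) = map_mx (fun z : int => z%:~R) (Wm W).
    apply/matrixP => a b; rewrite !mxE /g /ga /gv liftK; case: (unlift ord0 b) => [b'|] //=; by rewrite /lat mxE.
  have Hd0 : \det (Wm W) != 0.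
    move: Hrf; rewrite Hmat row_free_unit unitmxE unitfE det_map_mx.
    by rewrite intr_eq0.
  apply: (@simplex n vs gens E k E0 En k0 _ W LamW x (leqnn _) Hd0) => //.
  - by move=> kk; apply: polyh_vs.
  - by move=> kk; apply: HLam0.
have HSn : (#|S| <= n)%N by move: HT HS; rewrite HTS; lia.
apply: (@good _ vs gens (ordinal N) (fun l : 'I_N => nth 0 vs l) Lam C x E k E0 k0) => //.
- by move=> l; apply: polyh_vs.
pose f l := Lam l - (Num.truncn (Lam l))%:R.
have Hf0 l : l \notin S -> f l = 0 by move/HLS; rewrite /f => ->; rewrite truncn0 subrr.
have Hf1 l : f l < 1.
  by have /andP [_ H] := truncn_itv (HLam0 l); rewrite /f ltrBlDr addrC natr1.
rewrite -/(f _).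
have HsS : \sum_l f l = \sum_(l in S) f l.
  rewrite (bigID (mem S)) /= [X in _ + X]big1 ?addr0 // => l; exact: Hf0.
pose A := (\sum_l Num.truncn (Lam l))%N.
have HsA : \sum_l f l = (k.+1 * E)%:R - A%:R by rewrite sumrB HLam natr_sum.
case: (eqVneq #|S| 0%N) => HS0.
  rewrite HsS big1 ?ler0n // => l; move: HS0 => /eqP; rewrite cards_eq0 => /eqP ->.
  by rewrite in_set0.
have Hlt : \sum_l f l < n%:R.
  apply: (@lt_le_trans _ _ (#|S|%:R)); last by rewrite ler_nat.
  rewrite HsS -sum1_card natr_sum; apply: ltr_sum => //.
  have [l Hl] : exists l, l \in S by apply/card_gt0P; rewrite lt0n.
  by apply/hasP; exists l => //; exact: mem_index_enum.
have H2 : (k.+1 * E < A + n)%N by rewrite -(ltr_nat rat) natrD; move: Hlt; rewrite HsA; lra.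
have H3 : (k.+1 * E <= A + E)%N by lia.
rewrite HsA; move: H3; rewrite -(ler_nat rat) natrD; lra.
Qed.

Lemma homotM n (P : 'rV[rat]_n -> Prop) k E x :
  homot k (homot E P) x <-> homot (k * E) P x.
Proof.
split.
  by move=> [y [[z [Pz ->]] ->]]; exists z; split => //; rewrite scalerA natrM.
by move=> [z [Pz ->]]; exists (E%:R *: z); split; [exists z|rewrite scalerA natrM].
Qed.

Unset Implicit Arguments. Set Strict Implicit.
Theorem theorem3p5p6 (n : nat) (gens : seq 'rV[rat]_n) (vs : seq 'rV[int]_n) :
  strongly_convex gens ->
  forall e : nat, (0 < e)%N -> (n.-1 <= e)%N ->
    normal_polyh (homot e (polyh vs gens)).
Proof.
move=> _ E E0 En k k0 m; split.
- elim: k k0 m => [//|k IH] _ m.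
  case: k IH => [_ H|k IH H].
    move: H => [y [Hy Hl]]; rewrite scale1r in Hl; exists (fun _ => m); split; [by move=> _; rewrite Hl|by rewrite big_ord1].
  have [m0 [Hm0 Hrest]] := peel E0 En (ltn0Sn k) (proj1 (homotM _ _ _ _) H).
  have [ms [Hms Hsum]] := IH (ltn0Sn k) (m - m0) (proj2 (homotM _ _ _ _) Hrest).
  exists (fun j : 'I_k.+2 => if (j : nat) == 0%N then m0 else ms (inord j.-1)).
  split.
    by move=> j; case: eqP => _ //.
  rewrite big_ord_recl /=; rewrite (eq_bigr (fun i => ms i)); first by rewrite -Hsum addrC subrK.
  by move=> i _; rewrite /= inord_val.
- move=> [ms [Hms ->]].
  have [p Hp] := fin_all_exists (fun j => Hms j).
  have Hk : (k%:R : rat) != 0 by rewrite pnatr_eq0 -lt0n.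
  have := @wsum n vs gens _ p (fun _ => E%:R / k%:R) 0 E E0 (fun j => proj1 (Hp j)).
  move=> /(_ (fun _ => _)) []; first by rewrite divr_ge0 ?ler0n.
  - by rewrite sumr_const card_ord -[LHS]mulr_natr divfK.
  - exact: dual0.
  move=> y [Py Hy]; exists (E%:R *: y); split; first by exists y.
  rewrite -Hy addr0 scaler_sumr lat_sum.
  apply: eq_bigr => j _; rewrite (proj2 (Hp j)) !scalerA; congr (_ *: _).
  by rewrite mulrC divfK.
Qed.
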